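(* Let $\Delta$ be the root system of a simple complex Lie algebra, with positive roots $\Delta^+$, simple roots $\Pi$ and highest root $\theta$. Let $\alpha\in\Pi$ be such that $\mathrm{ht}_\alpha(\theta)=2d_\alpha+1$ is odd. Then $\bigcup_{j\ge d_\alpha+1}\Delta_\alpha(j)$ is a maximal abelian (upper) ideal of $\Delta^+$ (equivalently, $\bigoplus_{j\ge d_\alpha+1}\mathfrak g_\alpha(j)$ is a maximal abelian ideal of the Borel subalgebra).
   Context: For $\mu=\sum_{\beta\in\Pi}c_\beta\beta$, $\mathrm{ht}_\alpha(\mu)=c_\alpha$; $\Delta_\alpha(i)=\{\gamma\in\Delta\mid\mathrm{ht}_\alpha(\gamma)=i\}$ and $\mathfrak g_\alpha(i)$ is the corresponding sum of root spaces. An upper ideal of $\Delta^+$ is a subset $I\subset\Delta^+$ with $\gamma\in I,\nu\in\Delta^+,\nu+\gamma\in\Delta^+\Rightarrow\nu+\gamma\in I$; it is abelian if $\gamma'+\gamma''\notin\Delta^+$ for all $\gamma',\gamma''\in I$; maximality is with respect to inclusion among abelian upper ideals. *)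

(* Defs.v *)
From HB Require Import structures.
From mathcomp Require Import all_boot all_order all_algebra.
From mathcomp Require Import reals.
Set Implicit Arguments. Unset Strict Implicit. Unset Printing Implicit Defensive.
Import Order.TTheory GRing.Theory Num.Theory.
Local Open Scope ring_scope.

Section RootSystems.
Variables (R : realType) (n : nat).
Notation V := 'rV[R]_n.

Definition dot (u v : V) : R := (u *m v^T) 0 0.

Definition refl (a b : V) : V := b - ((2 * dot b a) / dot a a) *: a.

Definition base_mx (pi : 'I_n -> V) : 'M[R]_n := \matrix_(i, j) pi i 0 j.

(* ht_i(mu): the coefficient of the simple root pi i in mu *)
Definition ht (pi : 'I_n -> V) (i : 'I_n) (mu : V) : R :=
  (mu *m invmx (base_mx pi)) 0 i.

Record irreducible_root_system_with_base (Phi : seq V) (pi : 'I_n -> V) : Prop := {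
  rs_nonzero : 0 \notin Phi;
  rs_refl : forall a b, a \in Phi -> b \in Phi -> refl a b \in Phi;
  rs_integral : forall a b, a \in Phi -> b \in Phi ->
      exists z : int, (2 * dot b a) / dot a a = z%:~R;
  rs_reduced : forall a (c : R), a \in Phi -> c *: a \in Phi -> c = 1 \/ c = -1;
  rs_irreducible : forall P : pred V,
      (forall a b, a \in Phi -> b \in Phi -> P a -> ~~ P b -> dot a b = 0) ->
      (forall a, a \in Phi -> P a) \/ (forall a, a \in Phi -> ~~ P a);
  base_roots : forall i, pi i \in Phi;
  base_basis : base_mx pi \in unitmx;
  base_integral : forall b i, b \in Phi -> exists z : int, ht pi i b = z%:~R;
  base_sign : forall b, b \in Phi ->
      (forall i, 0 <= ht pi i b) \/ (forall i, ht pi i b <= 0)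
}.

Definition pos_root (Phi : seq V) (pi : 'I_n -> V) (b : V) : bool :=
  (b \in Phi) && [forall i, 0 <= ht pi i b].

Definition highest_root (Phi : seq V) (pi : 'I_n -> V) (th : V) : Prop :=
  th \in Phi /\ forall b i, b \in Phi -> ht pi i b <= ht pi i th.

Definition upper_ideal (Phi : seq V) (pi : 'I_n -> V) (I : pred V) : Prop :=
  (forall g, I g -> pos_root Phi pi g) /\
  (forall g nu, I g -> pos_root Phi pi nu -> pos_root Phi pi (nu + g) -> I (nu + g)).

Definition abelian_set (Phi : seq V) (pi : 'I_n -> V) (I : pred V) : Prop :=
  forall g1 g2, I g1 -> I g2 -> ~~ pos_root Phi pi (g1 + g2).

Definition abelian_ideal (Phi : seq V) (pi : 'I_n -> V) (I : pred V) : Prop :=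
  upper_ideal Phi pi I /\ abelian_set Phi pi I.

Definition maximal_abelian_ideal (Phi : seq V) (pi : 'I_n -> V) (I : pred V) : Prop :=
  abelian_ideal Phi pi I /\
  forall J : pred V, abelian_ideal Phi pi J -> (forall g, I g -> J g) ->
    forall g, J g -> I g.

End RootSystems.

(* Main.v *)
Require Import Defs.
From HB Require Import structures.
From mathcomp Require Import all_boot all_order all_algebra.
From mathcomp Require Import reals.
From mathcomp Require Import zify ring lra.
Set Implicit Arguments. Unset Strict Implicit. Unset Printing Implicit Defensive.
Import Order.TTheory GRing.Theory Num.Theory.
Local Open Scope ring_scope.

Section Basics.
Variables (R : realType) (n : nat).
Implicit Types u v w : 'rV[R]_n.

Lemma dotE u v : dot u v = \sum_j u 0 j * v 0 j.
Proof. by rewrite /dot !mxE; apply: eq_bigr => j _; rewrite mxE. Qed.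

Lemma dotC u v : dot u v = dot v u.
Proof. by rewrite !dotE; apply: eq_bigr => j _; rewrite mulrC. Qed.

Lemma dotDl u v w : dot (u + w) v = dot u v + dot w v.
Proof. by rewrite !dotE -big_split; apply: eq_bigr => j _; rewrite mxE mulrDl. Qed.

Lemma dotZl (c : R) u v : dot (c *: u) v = c * dot u v.
Proof. by rewrite !dotE mulr_sumr; apply: eq_bigr => j _; rewrite mxE mulrA. Qed.

Lemma dotNl u v : dot (- u) v = - dot u v.
Proof. by rewrite -scaleN1r dotZl mulN1r. Qed.

Lemma dotBl u v w : dot (u - w) v = dot u v - dot w v.
Proof. by rewrite dotDl dotNl. Qed.

Lemma dot0l v : dot 0 v = 0.
Proof. by rewrite dotE big1 // => j _; rewrite mxE mul0r. Qed.

Lemma dotDr u v w : dot v (u + w) = dot v u + dot v w.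
Proof. by rewrite dotC dotDl !(dotC v). Qed.
Lemma dotZr (c : R) u v : dot v (c *: u) = c * dot v u.
Proof. by rewrite dotC dotZl dotC. Qed.
Lemma dotNr u v : dot v (- u) = - dot v u.
Proof. by rewrite dotC dotNl dotC. Qed.
Lemma dotBr u v w : dot v (u - w) = dot v u - dot v w.
Proof. by rewrite dotDr dotNr. Qed.

Lemma dot_suml (I : Type) (r : seq I) (P : pred I) (F : I -> 'rV[R]_n) v :
  dot (\sum_(i <- r | P i) F i) v = \sum_(i <- r | P i) dot (F i) v.
Proof. by apply: (big_morph (fun u => dot u v)) => [x y|]; rewrite ?dotDl ?dot0l. Qed.

Lemma dot_ge0 u : 0 <= dot u u.
Proof. by rewrite dotE; apply: sumr_ge0 => j _; rewrite -expr2 sqr_ge0. Qed.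

Lemma dot_eq0 u : dot u u = 0 -> u = 0.
Proof.
rewrite dotE => /psumr_eq0P H; apply/rowP => j; rewrite mxE.
have {H} H : forall i, true -> u 0 i * u 0 i = 0 by apply: H => i _; rewrite -expr2 sqr_ge0.
have := H j isT; rewrite -expr2 => /eqP.
by rewrite sqrf_eq0 => /eqP.
Qed.

Variable pi : 'I_n -> 'rV[R]_n.
Hypothesis Hunit : base_mx pi \in unitmx.

Lemma htD i u v : ht pi i (u + v) = ht pi i u + ht pi i v.
Proof. by rewrite /ht mulmxDl mxE. Qed.
Lemma htZ i (c : R) u : ht pi i (c *: u) = c * ht pi i u.
Proof. by rewrite /ht -scalemxAl mxE. Qed.
Lemma htN i u : ht pi i (- u) = - ht pi i u.
Proof. by rewrite -scaleN1r htZ mulN1r. Qed.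
Lemma htB i u v : ht pi i (u - v) = ht pi i u - ht pi i v.
Proof. by rewrite htD htN. Qed.

Lemma row_base i : row i (base_mx pi) = pi i.
Proof. by apply/rowP => k; rewrite !mxE. Qed.

Lemma ht_pi i j : ht pi i (pi j) = (j == i)%:R.
Proof.
rewrite /ht -row_base -row_mul mulmxV // !mxE. 
by case: eqP.
Qed.

Lemma decomp u : u = \sum_i ht pi i u *: pi i.
Proof.
rewrite -{1}(mulmxKV Hunit u) mulmx_sum_row.
by apply: eq_bigr => i _; rewrite row_base.
Qed.

Lemma dot_decomp u v : dot u v = \sum_i ht pi i u * dot (pi i) v.
Proof.
rewrite {1}(decomp u) dot_suml; apply: eq_bigr => i _; by rewrite dotZl.
Qed.

End Basics.

Section Roots.
Variables (R : realType) (n : nat) (Phi : seq 'rV[R]_n) (pi : 'I_n -> 'rV[R]_n).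
Hypothesis Hrs : irreducible_root_system_with_base Phi pi.
Implicit Types a b x y : 'rV[R]_n.

Lemma dot_pos a : a \in Phi -> 0 < dot a a.
Proof.
move=> aP; rewrite lt_def dot_ge0 andbT; apply/eqP => /dot_eq0 a0.
by move: (rs_nonzero Hrs); rewrite -a0 aP.
Qed.

Lemma reflE a b : refl a b = b - ((2 * dot b a) / dot a a) *: a.
Proof. by []. Qed.

Lemma refl_self a : a \in Phi -> refl a a = - a.
Proof.
move=> aP; have h := dot_pos aP; rewrite reflE -mulrA divff ?gt_eqF // mulr1.
by rewrite scaler_nat mulr2n opprD addNKr.
Qed.

Lemma root_opp a : a \in Phi -> - a \in Phi.
Proof. by move=> aP; rewrite -refl_self // (rs_refl Hrs). Qed.

Lemma dot_refl a x : a \in Phi -> dot (refl a x) a = - dot x a.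
Proof.
move=> aP; have h := dot_pos aP; rewrite reflE dotBl dotZl -mulrA mulVf ?gt_eqF //.
by rewrite mulr1; ring.
Qed.

Lemma dot_refl' a x y : dot (refl a x) y = dot x y - (2 * dot x a / dot a a) * dot a y.
Proof. by rewrite reflE dotBl dotZl. Qed.

Lemma ht_refl a x i : ht pi i (refl a x) = ht pi i x - (2 * dot x a / dot a a) * ht pi i a.
Proof. by rewrite reflE htB htZ. Qed.

Lemma refl_inv a x : a \in Phi -> refl a (refl a x) = x.
Proof.
move=> aP; rewrite {1}reflE dot_refl // mulrN mulNr scaleNr opprK reflE.
by rewrite subrK.
Qed.

Lemma int_ge1 (z : int) : 0 < z%:~R :> R -> (1 <= z)%R.
Proof. by rewrite ltr0z. Qed.

Lemma root_sub x y : x \in Phi -> y \in Phi -> 0 < dot x y -> x != y -> x - y \in Phi.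
Proof.
move=> xP yP hxy nxy.
have hx := dot_pos xP; have hy := dot_pos yP.
have [p hp] := rs_integral Hrs xP yP.
have [q hq] := rs_integral Hrs yP xP.
have p0 : 0 < p%:~R :> R by rewrite -hp divr_gt0 // mulr_gt0 // dotC.
have q0 : 0 < q%:~R :> R by rewrite -hq divr_gt0 // mulr_gt0.
have := int_ge1 p0; have := int_ge1 q0.
have [e1|p1] := eqVneq p 1.
  move=> _ _; have := rs_refl Hrs xP yP; rewrite reflE hp e1 scale1r => /root_opp.
  by rewrite opprB.
have [e1|q1] := eqVneq q 1.
  by move=> _ _; have := rs_refl Hrs yP xP; rewrite reflE hq e1 scale1r.
move=> q1' p1'.
have p2 : 2 <= p by lia.
have q2 : 2 <= q by lia.
have p2' : 2 <= p%:~R :> R by rewrite (ler_int R 2 p).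
have q2' : 2 <= q%:~R :> R by rewrite (ler_int R 2 q).
move: p2' q2'; rewrite -hp -hq !ler_pdivlMr // => h1 h2.
have : dot (x - y) (x - y) <= 0.
  rewrite !dotBl !dotBr (dotC y x).
  move: h1; rewrite (dotC y x) => h1; lra.
move=> h; have h0 : dot (x - y) (x - y) = 0 by apply/eqP; rewrite eq_le h dot_ge0.
by move/dot_eq0/eqP: h0; rewrite subr_eq0 (negbTE nxy).
Qed.

Lemma root_add x y : x \in Phi -> y \in Phi -> dot x y < 0 -> x != - y -> x + y \in Phi.
Proof.
move=> xP yP h nxy; rewrite -(opprK y); apply: root_sub => //; first exact: root_opp.
by rewrite dotNr oppr_gt0.
Qed.

Lemma pos_of_level (k : 'I_n) x : x \in Phi -> 0 < ht pi k x -> pos_root Phi pi x.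
Proof.
move=> xP h; rewrite /pos_root xP /=; apply/forallP => i.
case: (base_sign Hrs xP) => H; first exact: H.
by have := H k; rewrite leNgt h.
Qed.

End Roots.

Section Main.
Variables (R : realType) (n : nat) (Phi : seq 'rV[R]_n) (pi : 'I_n -> 'rV[R]_n).
Variables (theta : 'rV[R]_n) (a : 'I_n) (d : nat).
Hypothesis Hrs : irreducible_root_system_with_base Phi pi.
Hypothesis Hth : highest_root Phi pi theta.
Hypothesis Ha : ht pi a theta = (2 * d + 1)%:R.
Implicit Types x y : 'rV[R]_n.

Let Hunit := base_basis Hrs.

Lemma theta_dot_simple i : 0 <= dot theta (pi i).
Proof.
case: Hth => thP thH.
rewrite leNgt; apply/negP => h.
have piP := base_roots Hrs i.
have hi1 := thH _ i piP; rewrite ht_pi // eqxx /= in hi1.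
have ne : theta != - pi i.
  apply/eqP => e; move: hi1; rewrite e htN ht_pi // eqxx /=; lra.
have := thH _ i (root_add Hrs thP piP h ne).
rewrite htD ht_pi // eqxx /=; lra.
Qed.

Lemma theta_dot_pos x : pos_root Phi pi x -> 0 <= dot x theta.
Proof.
case/andP=> _ /forallP xpos; rewrite (dot_decomp Hunit).
by apply: sumr_ge0 => i _; rewrite mulr_ge0 // dotC theta_dot_simple.
Qed.

Definition S := undup [seq x <- Phi | ht pi a x == (2 * d + 1)%:R].
Definition sigma := \sum_(x <- S) x.

Lemma memS x : (x \in S) = (x \in Phi) && (ht pi a x == (2 * d + 1)%:R).
Proof. by rewrite mem_undup mem_filter andbC. Qed.

Lemma sigma_perp i : i != a -> dot sigma (pi i) = 0.
Proof.
move=> ia; have piP := base_roots Hrs i.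
set g := refl (pi i).
have ginj : injective g by apply: (can_inj (g := g)) => x; rewrite /g (refl_inv Hrs).
have pe : perm_eq S (map g S).
  apply: uniq_perm; first exact: undup_uniq.
    by rewrite (map_inj_uniq ginj) undup_uniq.
  have gS x : x \in S -> g x \in S.
    rewrite !memS => /andP[xP /eqP hx]; rewrite (rs_refl Hrs piP xP) /=.
    by rewrite /g ht_refl ht_pi // (negbTE ia) mulr0 subr0 hx.
  move=> x; apply/idP/idP => [xS|/mapP[y yS ->]]; last exact: gS.
  by apply/mapP; exists (g x); [exact: gS | rewrite /g (refl_inv Hrs)].
have e : \sum_(x <- S) dot x (pi i) = - \sum_(x <- S) dot x (pi i).
  rewrite {1}(perm_big _ pe) big_map -sumrN; apply: eq_bigr => x _.
  by rewrite /g (dot_refl Hrs).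
rewrite /sigma dot_suml; lra.
Qed.

Lemma dot_sigma v : dot sigma v = ht pi a v * dot sigma (pi a).
Proof.
rewrite dotC (dot_decomp Hunit) (bigD1 a) //= big1 ?addr0 ?(dotC sigma) //.
by move=> i ia; rewrite dotC sigma_perp // mulr0.
Qed.

Lemma sigma_theta : 0 < dot sigma theta.
Proof.
case: Hth => thP _.
have thS : theta \in S by rewrite memS thP Ha eqxx.
rewrite /sigma dot_suml (big_rem _ thS) /=.
apply: (lt_le_trans (dot_pos Hrs thP)); rewrite lerDl.
rewrite big_seq; apply: sumr_ge0 => x /mem_rem; rewrite memS => /andP[xP /eqP hx].
apply: theta_dot_pos; apply: (pos_of_level Hrs (k := a)) => //.
by rewrite hx ltr0n addn1.
Qed.

Lemma sigma_a : 0 < dot sigma (pi a).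
Proof.
have := sigma_theta; rewrite dot_sigma Ha pmulr_rgt0 //.
by rewrite ltr0n addn1.
Qed.

Lemma exists_high x : 0 < ht pi a x -> exists2 y, y \in S & 0 < dot y x.
Proof.
move=> hx; have : 0 < dot sigma x by rewrite dot_sigma mulr_gt0 // sigma_a.
rewrite /sigma dot_suml => hs.
have [H|H] := boolP [exists y : seq_sub S, 0 < dot (val y) x].
  by case/existsP: H => y hy; exists (val y) => //; exact: valP.
move: hs; rewrite ltNge => /negP; case.
rewrite big_seq; apply: sumr_le0 => y yS.
rewrite leNgt; apply/negP => h; move/negP: H; apply.
by apply/existsP; exists (SeqSub yS).
Qed.

End Main.

Unset Implicit Arguments.

Theorem proposition3p8 (R : realType) (n : nat) (Phi : seq 'rV[R]_n)
    (pi : 'I_n -> 'rV[R]_n) (theta : 'rV[R]_n) (a : 'I_n) (d : nat) :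
  irreducible_root_system_with_base Phi pi ->
  highest_root Phi pi theta ->
  ht pi a theta = (2 * d + 1)%:R ->
  maximal_abelian_ideal Phi pi
    (fun g => pos_root Phi pi g && ((d + 1)%:R <= ht pi a g)).
Proof.
move=> Hrs Hth Ha.
have Hunit := base_basis Hrs.
have posge x i : pos_root Phi pi x -> 0 <= ht pi i x.
  by case/andP=> _ /forallP.
have posP x : pos_root Phi pi x -> x \in Phi by case/andP.
have dR : (2 * d + 1)%:R = 2 * d%:R + 1 :> R by rewrite natrD natrM.
have dR1 : (d + 1)%:R = d%:R + 1 :> R by rewrite natrD.
have d0 : 0 <= d%:R :> R by rewrite ler0n.
split.
  split.
    split; first by move=> g /andP[].
    move=> g nu /andP[gp hg] nup nugp; rewrite nugp /= htD.
    have := posge nu a nup; lra.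
  move=> g1 g2 /andP[_ h1] /andP[_ h2]; apply/negP => /andP[sP _].
  have := (proj2 Hth) _ a sP; rewrite htD Ha; lra.
move=> J [[Jpos Jup] Jab] IJ g Jg.
have gpos := Jpos g Jg; rewrite gpos /=.
have posc x : J x -> 0 < ht pi a x -> ht pi a x < (d + 1)%:R -> False.
  move=> Jx hx hx2; have xP := posP _ (Jpos x Jx).
  have [y yS hy] := exists_high Hrs Hth Ha hx.
  move: yS; rewrite memS => /andP[yP /eqP hya].
  have nyx : y != x by apply/eqP => e; move: hx2; rewrite -e hya; lra.
  have zP := root_sub Hrs yP xP hy nyx.
  have [k hk] := base_integral Hrs a xP.
  have kd : ht pi a x <= d%:R.
    have e1 : d%:R + 1 = ((d%:Z + 1)%:~R : R) by rewrite intrD -pmulrn.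
    move: hx2; rewrite hk dR1 e1 ltr_int => kl.
    have : (k <= d%:Z)%R by lia.
    by rewrite -(ler_int R) -pmulrn.
  have hz : (d + 1)%:R <= ht pi a (y - x) by rewrite htB hya dR dR1; lra.
  have Iz : J (y - x).
    apply: IJ; rewrite hz andbT; apply: (pos_of_level Hrs (k := a)) => //.
    by apply: lt_le_trans hz; rewrite ltr0n addn1.
  have := Jab _ _ Iz Jx; rewrite subrK (pos_of_level Hrs (k := a)) //.
  by rewrite hya ltr0n addn1.
rewrite leNgt; apply/negP => hlt.
have hg0 := posge g a gpos.
have gP := posP _ gpos.
have [hgp|hgz] : 0 < ht pi a g \/ ht pi a g = 0.
- by move: hg0; rewrite le_eqVlt => /orP[/eqP ->|]; [right|left].
- exact: posc Jg hgp hlt.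
pose P := fun x => (ht pi a x != 0) || has (fun y => (ht pi a y != 0) && (dot x y != 0)) Phi.
have HP : forall u v, u \in Phi -> v \in Phi -> P u -> ~~ P v -> dot u v = 0.
  move=> u v uP vP Pu; rewrite /P negb_or negbK => /andP[/eqP hv /hasPn hn].
  have hn' : forall y, y \in Phi -> ht pi a y != 0 -> dot v y = 0.
    move=> y yP hy; have := hn y yP; rewrite hy /= => /negbNE /eqP //.
  case/orP: Pu => [hu | /hasP[y yP /andP[hy duy]]].
    by rewrite dotC; apply: hn'.
  have [hu|hu] := eqVneq (ht pi a u) 0; last by rewrite dotC; apply: hn'.
  have ry := rs_refl Hrs uP yP.
  have hry : ht pi a (refl u y) != 0 by rewrite ht_refl hu mulr0 subr0.
  have := hn' _ ry hry; rewrite dotC dot_refl' (dotC y v) (hn' _ yP hy) sub0r.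
  move/eqP; rewrite oppr_eq0 mulf_eq0 => /orP[|/eqP] //.
  have uu := dot_pos Hrs uP.
  rewrite mulf_eq0 invr_eq0 (gt_eqF uu) orbF mulf_eq0 pnatr_eq0 /= dotC.
  by rewrite (negbTE duy).
case: (rs_irreducible Hrs HP) => [Hall|Hnone]; last first.
  by have := Hnone _ (base_roots Hrs a); rewrite /P ht_pi // eqxx oner_eq0.
have := Hall g gP; rewrite /P hgz eqxx /= => /hasP[y yP /andP[hy dgy]].
have [c [cP hc dc]] : exists c, [/\ c \in Phi, 0 < ht pi a c & dot g c != 0].
  have [hyn|hyp] : ht pi a y < 0 \/ 0 < ht pi a y.
    by move: hy; rewrite neq_lt => /orP[]; [left|right].
  - exists (- y); split; first exact: (root_opp Hrs).
      by rewrite htN oppr_gt0.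
    by rewrite dotNr oppr_eq0.
  - by exists y.
have [e [eP he de]] : exists e, [/\ e \in Phi, ht pi a e = ht pi a c & dot g e < 0].
  have [dn|dp] : dot g c < 0 \/ 0 < dot g c.
    by move: dc; rewrite neq_lt => /orP[]; [left|right].
  - by exists c.
  - exists (refl g c); split; first exact: (rs_refl Hrs).
      by rewrite ht_refl hgz mulr0 subr0.
    rewrite dotC (dot_refl Hrs) //.
    by rewrite oppr_lt0 dotC.
have ne : g != - e by apply/eqP => E; move: hgz; rewrite E htN he; lra.
have sP := root_add Hrs gP eP de ne.
have epos : pos_root Phi pi e by apply: (pos_of_level Hrs (k := a)); rewrite // he.
have spos : pos_root Phi pi (e + g).
  apply: (pos_of_level Hrs (k := a)); first by rewrite addrC.
  by rewrite htD hgz addr0 he.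
have [hd|hd] := lerP ((d + 1)%:R) (ht pi a e).
  have Je : J e by apply: IJ; rewrite epos hd.
  by have := Jab _ _ Jg Je; rewrite addrC spos.
have Jeg := Jup g e Jg epos spos.
apply: (posc _ Jeg); rewrite htD hgz addr0 he.
  exact: hc.
by rewrite -he.
Qed.
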